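(* Let $\mathbb{G}$ be a linear array (finite set of integers with $\min\mathbb{G}=0$) whose difference coarray $\mathbb{D}$ is hole-free, and let $M=|\mathbb{U}|=|\mathbb{D}|$. For every $r\ge 1$, the difference coarray $\mathbb{D}_r$ of the fractal array $\mathbb{F}_r$ generated by $\mathbb{G}$ is hole-free, and $$\mathbb{D}_r=\left[-\tfrac{M^r-1}{2},\tfrac{M^r-1}{2}\right]\cap\mathbb{Z}.$$
   Context: A linear array is a finite set $\mathbb{G}\subset\mathbb{Z}$ of sensor positions, normalized so that $\min\mathbb{G}=0$. Its difference coarray is $\mathbb{D}=\{n_1-n_2: n_1,n_2\in\mathbb{G}\}$. For $m\ge 0$ let $\mathbb{U}_m=\{-m,\dots,-1,0,1,\dots,m\}$; the central ULA $\mathbb{U}$ of $\mathbb{D}$ is the largest $\mathbb{U}_m$ contained in $\mathbb{D}$ (so $|\mathbb{U}|$ is odd). $\mathbb{D}$ is hole-free if $\mathbb{D}=\mathbb{U}$. For sets $A,B\subset\mathbb{Z}$, $A+B=\{a+b:a\in A,b\in B\}$ and $A+t=\{a+t:a\in A\}$. With $M=|\mathbb{U}|$, the fractal array generated by $\mathbb{G}$ is defined by $\mathbb{F}_0=\{0\}$ and $\mathbb{F}_{r+1}=\bigcup_{n\in\mathbb{G}}(\mathbb{F}_r+nM^r)$ for $r\ge 0$ (so $\mathbb{F}_1=\mathbb{G}$). *)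

(* Defs.v *)
(* Arrays are finite sets of integers, represented as seq int
   (only membership matters; duplicates are irrelevant). *)
From mathcomp Require Import all_boot all_order all_algebra.
Set Implicit Arguments. Unset Strict Implicit. Unset Printing Implicit Defensive.
Import Order.TTheory GRing.Theory Num.Theory.
Local Open Scope ring_scope.

Definition linear_array (G : seq int) : Prop :=
  (0 \in G) /\ (forall g, g \in G -> 0 <= g).

Definition coarray (G : seq int) : seq int := [seq a - b | a <- G, b <- G].

Definition ula (m : nat) : seq int :=
  [seq (i%:Z - m%:Z) | i <- iota 0 (2 * m + 1)].

Definition ula_in_coarray (G : seq int) (m : nat) : bool :=
  all (fun z => z \in coarray G) (ula m).

(* Radius of the central ULA: the largest m with U_m contained in D.
   Any such m satisfies m <= 2 * sum |g|, so the search bound is safe. *)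
Definition cula_rad (G : seq int) : nat :=
  \max_(m < (2 * \sum_(g <- G) `|g|%N).+1 | ula_in_coarray G m) m.

Definition central_ula (G : seq int) : seq int := ula (cula_rad G).

Definition hole_free (G : seq int) : Prop := coarray G =i central_ula G.

Fixpoint fractal (G : seq int) (M : nat) (r : nat) : seq int :=
  match r with
  | 0 => [:: 0]
  | r'.+1 => [seq f + n * (M ^ r')%:Z | n <- G, f <- fractal G M r']
  end.

(* Main.v *)
Require Import Defs.
From mathcomp Require Import all_boot all_order all_algebra zify ring.
Import Order.TTheory GRing.Theory Num.Theory.
Local Open Scope ring_scope.

Lemma mem_coarray s z : reflect (exists a b, [/\ a \in s, b \in s & z = a - b]) (z \in coarray s).
Proof.
apply: (iffP allpairsP) => [[[a b] /= [ha hb ->]]|[a [b [ha hb ->]]]].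
  by exists a, b.
by exists (a, b).
Qed.

Lemma mem_fractalS G M r x : reflect (exists n f, [/\ n \in G, f \in fractal G M r & x = f + n * (M^r)%:Z]) (x \in fractal G M r.+1).
Proof.
apply: (iffP allpairsP) => [[[a b] /= [ha hb ->]]|[a [b [ha hb ->]]]].
  by exists a, b.
by exists (a, b).
Qed.

Lemma mem_ula m z : (z \in ula m) = (-(m%:Z) <= z <= m%:Z).
Proof.
apply/mapP/idP.
  case=> i; rewrite mem_iota add0n => /andP[_ hi] ->; lia.
move=> hz; exists (absz (z + m%:Z)); last lia.
rewrite mem_iota; lia.
Qed.

Lemma step (m P K K' : nat) z : P = (2 * K+1)%N -> K' = (K + m * P)%N ->
  (-(K'%:Z) <= z <= K'%:Z) <-> exists d e, [/\ -(K%:Z) <= d <= K%:Z, -(m%:Z) <= e <= m%:Z & z = d + e * P%:Z].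
Proof.
move=> hP hK; split.
  move=> hz; pose n := absz (z + K'%:Z).
  have hn : n%:Z = z + K'%:Z by rewrite /n; lia.
  have hnl : (n < (2* m+1) * P)%N by lia.
  have hq : (n %/ P < 2* m+1)%N by rewrite ltn_divLR; lia.
  have hr : (n %% P < P)%N by rewrite ltn_mod; lia.
  have he := divn_eq n P.
  exists ((n %% P)%:Z - K%:Z), ((n %/ P)%:Z - m%:Z); split; try lia.
  nia.
move=> [d [e [hd he ->]]].
nia.
Qed.

Lemma Kodd (m r : nat) : ((2 * m + 1) ^ r = 2 * (((2 * m + 1) ^ r).-1)./2 + 1)%N.
Proof.
set x := ((2 * m + 1) ^ r)%N.
have ox : odd x by rewrite /x oddX addn1 /= mul2n odd_double orbT.
have hx := odd_double_half x; rewrite ox in hx.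
have -> : x.-1 = (x./2).*2 by rewrite -{1}hx.
by rewrite doubleK -{1}hx -mul2n /= add1n addn1.
Qed.

Lemma Kstep (m r : nat) :
  (((2 * m + 1) ^ r.+1).-1)./2 = ((((2 * m + 1) ^ r).-1)./2 + m * (2 * m + 1) ^ r)%N.
Proof.
have h1 := Kodd m r; have h2 := Kodd m r.+1.
move: h1 h2; rewrite !expnS.
move: (((2 * m + 1) * (2 * m + 1) ^ r).-1./2) => B.
move: (((2 * m + 1) ^ r).-1./2) => A.
move: ((2 * m + 1) ^ r)%N => P.
nia.
Qed.

Lemma aux (a b c d p : int) : a + c * p - (b + d * p) = (a - b) + (c - d) * p.
Proof. ring. Qed.

Lemma coarray_fr G m (hf : coarray G =i ula m) r z :
  z \in coarray (fractal G (2 * m + 1) r) =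
  (-(((((2 * m + 1) ^ r).-1)./2)%:Z) <= z <= ((((2 * m + 1) ^ r).-1)./2)%:Z).
Proof.
elim: r z => [|r IH] z.
  rewrite /coarray /= inE subr0; apply/eqP/idP => [->|h]; lia.
have hst := @step m _ _ _ z (Kodd m r) (Kstep m r).
apply/idP/idP.
  case/mem_coarray => a [b [/mem_fractalS [n1 [f1 [hn1 hf1 ->]]] /mem_fractalS [n2 [f2 [hn2 hf2 ->]]] hz]].
  apply (proj2 hst); exists (f1 - f2), (n1 - n2); split.
  - by rewrite -IH; apply/mem_coarray; exists f1, f2.
  - by rewrite -mem_ula -hf; apply/mem_coarray; exists n1, n2.
  - by rewrite hz aux.
move/(proj1 hst) => [d [e [hd he ->]]].
move: hd; rewrite -IH => /mem_coarray [f1 [f2 [hf1 hf2 ->]]].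
move: he; rewrite -mem_ula -hf => /mem_coarray [n1 [n2 [hn1 hn2 ->]]].
apply/mem_coarray; exists (f1 + n1 * ((2 * m + 1) ^ r)%N%:Z), (f2 + n2 * ((2 * m + 1) ^ r)%N%:Z).
split; first by apply/mem_fractalS; exists n1, f1.
  by apply/mem_fractalS; exists n2, f2.
by rewrite aux.
Qed.

Lemma abs_le_sum (s : seq int) x : x \in s -> (absz x <= \sum_(g <- s) absz g)%N.
Proof.
elim: s => //= y s IH; rewrite big_cons inE => /orP[/eqP->|/IH]; lia.
Qed.

Lemma cula_rad_eq (s : seq int) (K : nat) :
  (forall z, z \in coarray s = (-(K%:Z) <= z <= K%:Z)) -> cula_rad s = K.
Proof.
move=> hs.
have hK : (K%:Z) \in coarray s by rewrite hs; lia.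
have hin : forall k, ula_in_coarray s k = (k <= K)%N.
  move=> k; apply/allP/idP.
    move=> h; have := h (k%:Z); rewrite mem_ula hs; lia.
  move=> hk z; rewrite mem_ula hs; lia.
have hb : (K < (2 * \sum_(g <- s) absz g).+1)%N.
  case/mem_coarray: hK => a [b [ha hb hab]].
  have := abs_le_sum _ _ ha; have := abs_le_sum _ _ hb; lia.
apply/eqP; rewrite eqn_leq; apply/andP; split.
  by apply/bigmax_leqP => i; rewrite hin.
by rewrite /cula_rad; apply: (@leq_bigmax_cond _ _ _ (Ordinal hb)); rewrite hin.
Qed.

Theorem theorem1 (G : seq int) :
  linear_array G -> hole_free G ->
  let M := size (central_ula G) in
  forall r : nat, (1 <= r)%N ->
    hole_free (fractal G M r) /\
    coarray (fractal G M r) =i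
      [pred z : int | (- ((((M ^ r).-1)./2)%:Z) <= z) && (z <= (((M ^ r).-1)./2)%:Z)].
Proof.
move=> _ hG M r _.
have hM : M = (2 * cula_rad G + 1)%N by rewrite /M /central_ula /ula size_map size_iota.
have hc := @coarray_fr G _ hG r; rewrite -hM in hc.
split; last by move=> z; rewrite hc.
move=> z; by rewrite /central_ula (@cula_rad_eq _ _ hc) hc mem_ula.
Qed.
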